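(* Consider a first-price auction with participation revelation in an environment where the number of agents is random, drawn from a commonly known distribution with at least two agents almost surely. Agents have independent private valuations drawn i.i.d. from a continuous distribution $F$ and are risk-neutral. Then there exists an equilibrium in which every agent $i$ registers (indicates the intention to participate) and then bids $b^e(v_i,n)$, where $n$ is the number of registered bidders announced by the auctioneer.
   Context: First-price auction with participation revelation: (1) agents indicate their intention to bid (register); (2) the auctioneer announces $n$, the number of registered agents; (3) registered agents submit sealed bids, and only bids of registered agents are accepted; (4) the highest bidder receives the good and pays his bid, and all other agents pay $0$. There is no participation fee. An agent with valuation $v$ who wins and pays $t$ gets utility $v-t$; an agent who does not win and pays nothing gets $0$. For an integer $m\ge 2$, $b^e(v,m)=v-F(v)^{-(m-1)}\int_0^v F(u)^{m-1}\,du$. *)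

(* Defs.v *)
From HB Require Import structures.
From mathcomp Require Import all_boot all_order all_algebra.
From mathcomp Require Import all_classical all_reals all_analysis.
Set Implicit Arguments. Unset Strict Implicit. Unset Printing Implicit Defensive.
Import Order.TTheory GRing.Theory Num.Theory.
Import numFieldNormedType.Exports.
Local Open Scope classical_set_scope.
Local Open Scope ring_scope.

Section Auction.
Context {R : realType}.

Definition beq (F : R -> R) (v : R) (m : nat) : R :=
  v - (F v ^+ m.-1)^-1 *
      Rintegral (@lebesgue_measure R) `[0, v] (fun u => F u ^+ m.-1).

Context {d : measure_display} {Omega : measurableType d}.

Definition mutually_independent (P : probability Omega R) (X : nat -> Omega -> R) :=
  forall (s : seq nat), uniq s ->
  forall B : nat -> set R, (forall i, measurable (B i)) ->
  P (\big[setI/setT]_(i <- s) (X i @^-1` B i)) =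
  (\prod_(i <- s) P (X i @^-1` B i))%E.

(* Bidding stage, after the auctioneer announced n registered bidders.
   Our agent has valuation v and bids b; the n-1 other registered bidders
   (indices 0..n-2) have valuations X j and bid beq F (X j) n.
   The highest bid wins (ties broken uniformly at random), winner pays his bid. *)
Definition payoff (F : R -> R) (X : nat -> Omega -> R) (n : nat) (v b : R)
    (w : Omega) : R :=
  let others := [seq beq F (X j w) n | j <- iota 0 n.-1] in
  if all (fun c => c <= b) others
  then (v - b) / (1 + (count (fun c => c == b) others)%:R)
  else 0.

Definition EU (P : probability Omega R) (F : R -> R) (X : nat -> Omega -> R)
    (n : nat) (v b : R) : \bar R :=
  (\int[P]_w (payoff F X n v b w)%:E)%E.

(* The symmetric strategy profile "register, then bid beq F v n" is an
   equilibrium (sequentially rational at both stages) when: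
   - registration stage: given pN (distribution of the number n of registered
     bidders), the expected utility of registering and following the strategy
     is at least 0, the utility of not registering;
   - bidding stage: for every announced n that occurs with positive
     probability, no bid b gives a higher expected utility than beq F v n. *)
Definition register_and_bid_equilibrium (P : probability Omega R) (F : R -> R)
    (X : nat -> Omega -> R) (pN : nat -> R) : Prop :=
  forall v : R, 0 <= v ->
    (0 <= \sum_(n <oo) ((pN n)%:E * EU P F X n v (beq F v n)))%E /\
    (forall n : nat, 0 < pN n -> forall b : R,
        (EU P F X n v b <= EU P F X n v (beq F v n))%E).

End Auction.

(* Main.v *)
Require Import Defs.
From HB Require Import structures.
From mathcomp Require Import all_boot all_order all_algebra.
From mathcomp Require Import all_classical all_reals all_analysis.
From mathcomp Require Import ring lra.
Import Order.TTheory GRing.Theory Num.Theory.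
Import numFieldNormedType.Exports.
Local Open Scope classical_set_scope.
Local Open Scope ring_scope.
Set Implicit Arguments. Unset Strict Implicit.
Local Notation mu := (@lebesgue_measure _).

Lemma Gcont {R : realType} (F : R -> R) k : continuous F -> continuous (fun u => F u ^+ k).
Proof.
move=> Fc x.
exact: (@continuous_comp _ _ _ F (fun y => y ^+ k) x (Fc x) (@exprn_continuous _ k (F x))).
Qed.

Lemma Cint {R : realType} (f : R -> R) ba (a b : R) : continuous f ->
  mu.-integrable [set` Interval (BSide ba a) (BRight b)] (EFin \o f).
Proof.
move=> Fc.
have := @integrableS _ _ _ mu `[a, b]%classic [set` Interval (BSide ba a) (BRight b)] (EFin \o f) (measurable_itv _) (measurable_itv _).
apply.
- move=> x /=; rewrite !in_itv /= => /andP[+ ->]; rewrite andbT.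
  by case: ba => //= /ltW.
apply: continuous_compact_integrable; first exact: segment_compact.
by apply: continuous_subspaceT.
Qed.

Lemma Gint {R : realType} (F : R -> R) k ba (a b : R) : continuous F ->
  mu.-integrable [set` Interval (BSide ba a) (BRight b)] (EFin \o (fun u => F u ^+ k)).
Proof. by move=> Fc; apply: Cint; exact: Gcont. Qed.

Lemma Gsplit {R : realType} (F : R -> R) k ba (a c b : R) : continuous F ->
  a <= c -> c <= b ->
  \int[mu]_(x in [set` Interval (BSide ba a) (BRight b)]) (F x ^+ k) =
  \int[mu]_(x in [set` Interval (BSide ba a) (BRight c)]) (F x ^+ k) +
  \int[mu]_(x in [set` Interval (BRight c) (BRight b)]) (F x ^+ k).
Proof.
move=> Fc ac cb.
rewrite (@itv_bndbnd_setU _ _ _ (BRight c)); last 2 first.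
- by case: ba; rewrite bnd_simp.
- by rewrite bnd_simp.
rewrite Rintegral_setU //.
rewrite -(@itv_bndbnd_setU _ _ _ (BRight c)); first exact: Gint.
- by case: ba; rewrite bnd_simp.
- by rewrite bnd_simp.
rewrite /disj_set; apply/eqP; apply/seteqP; split => x //= [].
rewrite !in_itv /= => /andP[_ xc] /andP[cx _].
by move: (lt_le_trans cx xc); rewrite ltxx.
Qed.

Lemma mu_itv {R : realType} ba (a b : R) : a <= b ->
  fine (mu [set` Interval (BSide ba a) (BRight b)]) = b - a.
Proof.
move=> ab; rewrite lebesgue_measure_itv /=.
rewrite lte_fin; case: ltgtP ab => //.
by move=> -> _; rewrite subrr.
Qed.

Lemma Gle {R : realType} (F : R -> R) k ba (a b M : R) : continuous F -> a <= b ->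
  (forall x, a <= x <= b -> F x ^+ k <= M) ->
  \int[mu]_(x in [set` Interval (BSide ba a) (BRight b)]) (F x ^+ k) <= (b - a) * M.
Proof.
move=> Fc ab hM.
apply: (@le_trans _ _ (\int[mu]_(x in [set` Interval (BSide ba a) (BRight b)]) M)).
  apply: (@le_Rintegral _ _ _ mu).
  - exact: measurable_itv.
  - exact: Gint.
  - by apply: Cint; exact: cst_continuous.
  move=> x /=; rewrite in_itv /= => /andP[+ xb]; move=> h; apply: hM; rewrite xb andbT.
  by case: ba h => //= /ltW.
by rewrite Rintegral_cst; [rewrite mu_itv // mulrC | exact: measurable_itv].
Qed.

Lemma Gge {R : realType} (F : R -> R) k ba (a b M : R) : continuous F -> a <= b ->
  (forall x, a <= x <= b -> M <= F x ^+ k) ->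
  (b - a) * M <= \int[mu]_(x in [set` Interval (BSide ba a) (BRight b)]) (F x ^+ k).
Proof.
move=> Fc ab hM.
apply: (@le_trans _ _ (\int[mu]_(x in [set` Interval (BSide ba a) (BRight b)]) M)).
  by rewrite Rintegral_cst; [rewrite mu_itv // mulrC | exact: measurable_itv].
apply: (@le_Rintegral _ _ _ mu).
- exact: measurable_itv.
- by apply: Cint; exact: cst_continuous.
- exact: Gint.
move=> x /=; rewrite in_itv /= => /andP[+ xb]; move=> h; apply: hM; rewrite xb andbT.
by case: ba h => //= /ltW.
Qed.

Lemma cont_eps {R : realType} (f : R -> R) x e : {for x, continuous f} -> 0 < e ->
  exists2 d, 0 < d & forall y, `|x - y| < d -> `|f x - f y| < e.
Proof.
move=> fc e0; have := fc; move/cvgrPdist_lt => /(_ e e0).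
move/nbhs_ballP => [d /= d0 hd]; exists d => // y xy; apply: hd.
Qed.

Definition Ik {R : realType} (F : R -> R) k t :=
  \int[mu]_(x in `[0, t]) (F x ^+ k).
Definition bk {R : realType} (F : R -> R) k v := v - (F v ^+ k)^-1 * Ik F k v.

Lemma Ik_ge0 {R : realType} (F : R -> R) k t : (forall x, 0 <= F x) -> 0 <= Ik F k t.
Proof. by move=> F0; apply: Rintegral_ge0 => x _; exact: exprn_ge0. Qed.

Lemma Ik_le {R : realType} (F : R -> R) k t : continuous F -> (forall x, 0 <= F x) ->
  (forall x y, x <= y -> F x <= F y) -> 0 <= t -> Ik F k t <= t * F t ^+ k.
Proof.
move=> Fc F0 Fm t0; rewrite /Ik -[t in t * _]subr0.
apply: Gle => // x /andP[_ xt]; apply: lerXn2r; rewrite ?nnegrE ?F0 //.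
exact: Fm.
Qed.

Lemma Ik_zero {R : realType} (F : R -> R) k t : continuous F -> (forall x, 0 <= F x) ->
  (forall x y, x <= y -> F x <= F y) -> 0 <= t -> F t ^+ k = 0 -> Ik F k t = 0.
Proof.
move=> Fc F0 Fm t0 G0; apply/eqP; rewrite eq_le Ik_ge0 // andbT.
by have := Ik_le k Fc F0 Fm t0; rewrite G0 mulr0.
Qed.

Lemma Ik_cancel {R : realType} (F : R -> R) k t : continuous F -> (forall x, 0 <= F x) ->
  (forall x y, x <= y -> F x <= F y) -> 0 <= t ->
  (F t ^+ k)^-1 * Ik F k t * F t ^+ k = Ik F k t.
Proof.
move=> Fc F0 Fm t0; have [G0|G0] := eqVneq (F t ^+ k) 0.
  by rewrite G0 mulr0 Ik_zero.
by rewrite mulrC mulrA divff // mul1r.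
Qed.

Lemma bk_neg {R : realType} (F : R -> R) k x : (forall x, x <= 0 -> F x = 0) -> (0 < k)%N ->
  x <= 0 -> bk F k x = x.
Proof.
by move=> Fz k0 x0; rewrite /bk Fz // expr0n gtn_eqF // invr0 mul0r subr0.
Qed.

Lemma bk_U {R : realType} (F : R -> R) k v : continuous F -> (forall x, 0 <= F x) ->
  (forall x y, x <= y -> F x <= F y) -> 0 <= v ->
  (v - bk F k v) * F v ^+ k = Ik F k v.
Proof.
move=> Fc F0 Fm v0; rewrite /bk opprB addrC subrK.
exact: Ik_cancel.
Qed.

Lemma bk_le {R : realType} (F : R -> R) k v : (forall x, 0 <= F x) -> bk F k v <= v.
Proof.
move=> F0; rewrite /bk lerBlDr lerDl; apply: mulr_ge0; last exact: Ik_ge0.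
by rewrite invr_ge0 exprn_ge0.
Qed.

Lemma bk_ge0 {R : realType} (F : R -> R) k v : continuous F -> (forall x, 0 <= F x) ->
  (forall x y, x <= y -> F x <= F y) -> 0 <= v -> 0 <= bk F k v.
Proof.
move=> Fc F0 Fm v0; rewrite /bk subr_ge0.
have [G0|G0] := eqVneq (F v ^+ k) 0; first by rewrite G0 invr0 mul0r.
have Gp : 0 < F v ^+ k by rewrite lt_def G0 exprn_ge0.
by rewrite ler_pdivrMl // mulrC; exact: Ik_le.
Qed.

Lemma bk_K {R : realType} (F : R -> R) k v z : continuous F -> (forall x, 0 <= F x) ->
  (forall x y, x <= y -> F x <= F y) -> (forall x, x <= 0 -> F x = 0) -> (0 < k)%N ->
  0 <= v -> (v - bk F k z) * F z ^+ k <= (v - bk F k v) * F v ^+ k.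
Proof.
move=> Fc F0 Fm Fz k0 v0; rewrite bk_U //.
have [z0|z0] := leP z 0.
  by rewrite Fz // expr0n gtn_eqF // mulr0 Ik_ge0.
have -> : (v - bk F k z) * F z ^+ k = (v - z) * F z ^+ k + Ik F k z.
  by rewrite -(Ik_cancel k Fc F0 Fm (ltW z0)) /bk; ring.
have [zv|vz] := leP z v.
  rewrite /Ik (@Gsplit _ _ _ _ 0 z v) // ?(ltW z0) // [leRHS]addrC lerD2r.
  by apply: Gge => // x /andP[zx _]; apply: lerXn2r; rewrite ?nnegrE ?F0 //; exact: Fm.
rewrite /Ik (@Gsplit _ _ _ _ 0 v z) // ?(ltW vz) //.
have hJ : \int[mu]_(x in `]v, z]) (F x ^+ k) <= (z - v) * F z ^+ k.
  by apply: Gle => //; [exact: ltW| move=> x /andP[_ xz]; apply: lerXn2r; rewrite ?nnegrE ?F0 //; exact: Fm].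
move: hJ.
set J := \int[mu]_(x in `]v, z]) _; set Iv := \int[mu]_(x in `[0, v]) _; set Gz := F z ^+ k.
have -> : (v - z) * Gz = - ((z - v) * Gz) by ring.
lra.
Qed.

Lemma Gstrict {R : realType} (F : R -> R) k x v : continuous F -> (forall x, 0 <= F x) ->
  (forall x y, x <= y -> F x <= F y) -> x < v -> F x ^+ k < F v ^+ k ->
  \int[mu]_(y in `]x, v]) (F y ^+ k) < (v - x) * F v ^+ k.
Proof.
move=> Fc F0 Fm xv Gxv.
set e := (F v ^+ k - F x ^+ k) / 2.
have e0 : 0 < e by rewrite divr_gt0 // subr_gt0.
have [d d0 hd] := cont_eps (@Gcont _ F k Fc x) e0.
set dd := Num.min (d / 2) (v - x).
have dd0 : 0 < dd by rewrite lt_min divr_gt0 //= subr_gt0.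
have ddd : dd < d by rewrite gt_min ltr_pdivrMr // ltr_pMr // ltr1n.
have ddv : dd <= v - x by rewrite ge_min lexx orbT.
have h1 : \int[mu]_(y in `]x, x + dd]) (F y ^+ k) <= (x + dd - x) * (F x ^+ k + e).
  apply: Gle => //; first by rewrite lerDl ltW.
  move=> y /andP[xy yc].
  have : `|F x ^+ k - F y ^+ k| < e.
    apply: hd; rewrite distrC ger0_norm ?subr_ge0 //.
    by apply: le_lt_trans ddd; rewrite lerBlDl.
  rewrite ltr_norml => /andP[h _]; apply: ltW; lra.
have h2 : \int[mu]_(y in `]x + dd, v]) (F y ^+ k) <= (v - (x + dd)) * F v ^+ k.
  apply: Gle => //; first by rewrite -lerBrDl.
  by move=> y /andP[_ yv]; apply: lerXn2r; rewrite ?nnegrE ?F0 //; exact: Fm.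
rewrite (@Gsplit _ _ _ _ x (x + dd) v) //; last 2 first.
- by rewrite lerDl ltW.
- by rewrite -lerBrDl.
have h3 : dd * (F x ^+ k + e) < dd * F v ^+ k.
  by rewrite ltr_pM2l // /e; lra.
move: h1 h2 h3; rewrite addrAC subrr add0r.
set A := \int[mu]_(y in _) _; set B := \int[mu]_(y in _) _.
set Gv := F v ^+ k; set Gx := F x ^+ k.
have -> : (v - (x + dd)) * Gv = (v - x) * Gv - dd * Gv by ring.
lra.
Qed.

Lemma bk_strict {R : realType} (F : R -> R) k x v : continuous F -> (forall x, 0 <= F x) ->
  (forall x y, x <= y -> F x <= F y) -> 0 <= x -> x <= v -> F x ^+ k < F v ^+ k ->
  bk F k x < bk F k v.
Proof.
move=> Fc F0 Fm x0 xv Gxv.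
have xv' : x < v by rewrite lt_neqAle xv andbT; apply: contraTneq Gxv => ->; rewrite ltxx.
have Gv0 : 0 < F v ^+ k by apply: le_lt_trans Gxv; exact: exprn_ge0.
have hJ := Gstrict Fc F0 Fm xv' Gxv.
rewrite /bk /Ik (@Gsplit _ _ _ _ 0 x v) // -/(Ik F k x).
have hI : (F v ^+ k)^-1 * Ik F k x <= (F x ^+ k)^-1 * Ik F k x.
  have [G0|G0] := eqVneq (F x ^+ k) 0.
    by rewrite (Ik_zero Fc F0 Fm x0 G0) !mulr0.
  apply: ler_wpM2r; first exact: Ik_ge0.
  rewrite lef_pV2 ?posrE //; first exact: ltW.
  by rewrite lt_def G0 exprn_ge0.
have hJ' : (F v ^+ k)^-1 * \int[mu]_(y in `]x, v]) (F y ^+ k) < v - x.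
  by rewrite mulrC ltr_pdivrMr // mulrC.
move: hI hJ'; set J := \int[mu]_(y in _) _; set Ix := Ik F k x.
set a := (F v ^+ k)^-1; set b := (F x ^+ k)^-1.
rewrite mulrDr; lra.
Qed.

Lemma int_mono {d} {T : measurableType d} {R : realType} (mu : {measure set T -> \bar R})
  (f g : T -> \bar R) : (forall x, (0 <= f x)%E) -> (forall x, (f x <= g x)%E) ->
  (\int[mu]_x f x <= \int[mu]_x g x)%E.
Proof.
move=> f0 fg; have g0 : forall x, (0 <= g x)%E by move=> x; exact: le_trans (f0 x) (fg x).
rewrite (ge0_integralTE mu f0) (ge0_integralTE mu g0) /=.
apply: ereal_sup_le => _ [h hf <-]; exists h => //= x.
exact: le_trans (hf x) (fg x).
Qed.

Lemma int_indic_c {d} {T : measurableType d} {R : realType} (mu : {measure set T -> \bar R})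
  (A : set T) (c : R) : measurable A -> 0 <= c ->
  (\int[mu]_x (c * \1_A x)%:E = c%:E * mu A)%E.
Proof.
move=> mA c0.
rewrite (@integralZl_indic _ _ _ mu setT measurableT (fun _ => A) c) //.
  by rewrite integral_indic // setIT.
by move=> /(le_lt_trans c0); rewrite ltxx.
Qed.

Lemma int_le0 {d} {T : measurableType d} {R : realType} (mu : {measure set T -> \bar R})
  (f : T -> R) : (forall x, f x <= 0) -> (\int[mu]_x (f x)%:E <= 0)%E.
Proof.
move=> f0.
have -> : (\int[mu]_x (f x)%:E = \int[mu]_x (- (- f x)%:E))%E.
  by apply: eq_integral => x _; rewrite EFinN oppeK.
rewrite integral_ge0N; last by move=> x _; rewrite lee_fin oppr_ge0.
rewrite oppe_le0; apply: integral_ge0 => x _; by rewrite lee_fin oppr_ge0.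
Qed.

Lemma pow_lip {R : realType} (x y : R) k : 0 <= y -> y <= x -> x <= 1 ->
  x ^+ k - y ^+ k <= k%:R * (x - y).
Proof.
move=> y0 yx x1; elim: k => [|k IH]; first by rewrite !expr0 subrr mul0r.
have x0 : 0 <= x by exact: le_trans yx.
rewrite !exprS.
have -> : x * x ^+ k - y * y ^+ k = x * (x ^+ k - y ^+ k) + (x - y) * y ^+ k by ring.
have h1 : x * (x ^+ k - y ^+ k) <= k%:R * (x - y).
  apply: le_trans IH; rewrite ler_piMl //; first by rewrite subr_ge0 lerXn2r.
have h2 : (x - y) * y ^+ k <= (x - y).
  rewrite ler_piMr ?subr_ge0 //; apply: exprn_ile1 => //; exact: le_trans x1.
rewrite -natr1 [leRHS]mulrDl mul1r; lra.
Qed.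

Lemma approx {R : realType} (c a U : R) k : 0 <= c -> a <= 1 ->
  (forall e, 0 < e -> exists t, [/\ 0 <= t, t <= a, a - t < e & c * t ^+ k <= U]) ->
  c * a ^+ k <= U.
Proof.
move=> c0 a1 h; apply/ler_addgt0Pr => e e0.
set ck := c * k%:R.
have ck0 : 0 <= ck by rewrite mulr_ge0.
have e'0 : 0 < e / (ck + 1) by rewrite divr_gt0 // ltr_wpDl.
have [t [t0 ta ate ctU]] := h _ e'0.
have hl := pow_lip k t0 ta a1.
have : c * (a ^+ k - t ^+ k) <= ck * (a - t) by rewrite -mulrA ler_wpM2l.
have : ck * (a - t) <= ck * (e / (ck + 1)) by rewrite ler_wpM2l // ltW.
have : ck * (e / (ck + 1)) <= e.
  rewrite mulrA ler_pdivrMr ?ltr_wpDl // mulrC ler_pM2l //; lra.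
rewrite mulrBr; lra.
Qed.


Lemma mpre {d} {Omega : measurableType d} {R : realType} (X : nat -> Omega -> R) j (B : set R) :
  (forall j, measurable_fun setT (X j)) -> measurable B -> measurable (X j @^-1` B).
Proof. by move=> mX mB; rewrite -[X j @^-1` B]setTI; exact: mX. Qed.

Lemma F_ge0 {d} {Omega : measurableType d} {R : realType} (P : probability Omega R)
  (X : nat -> Omega -> R) (F : R -> R) :
  (forall j (x : R), P (X j @^-1` `]-oo, x]) = (F x)%:E) -> forall x, 0 <= F x.
Proof. by move=> PF x; rewrite -lee_fin -(PF 0%N x); exact: measure_ge0. Qed.

Lemma F_le1 {d} {Omega : measurableType d} {R : realType} (P : probability Omega R)
  (X : nat -> Omega -> R) (F : R -> R) : (forall j, measurable_fun setT (X j)) ->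
  (forall j (x : R), P (X j @^-1` `]-oo, x]) = (F x)%:E) -> forall x, F x <= 1.
Proof.
move=> mX PF x; have := @probability_le1 _ _ _ P (X 0%N @^-1` `]-oo, x]).
by rewrite PF lee_fin; apply; apply: mpre => //; exact: measurable_itv.
Qed.

Lemma F_mono {d} {Omega : measurableType d} {R : realType} (P : probability Omega R)
  (X : nat -> Omega -> R) (F : R -> R) : (forall j, measurable_fun setT (X j)) ->
  (forall j (x : R), P (X j @^-1` `]-oo, x]) = (F x)%:E) -> forall x y, x <= y -> F x <= F y.
Proof.
move=> mX PF x y xy; rewrite -lee_fin -!(PF 0%N).
apply: le_measure; rewrite ?inE; try (apply: mpre => //; exact: measurable_itv).
by move=> w /=; rewrite !in_itv /= => /le_trans; apply.
Qed.

Lemma F_top {d} {Omega : measurableType d} {R : realType} (P : probability Omega R)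
  (X : nat -> Omega -> R) (F : R -> R) : (forall j, measurable_fun setT (X j)) ->
  (forall j (x : R), P (X j @^-1` `]-oo, x]) = (F x)%:E) ->
  forall e, 0 < e -> exists x, 1 - e < F x.
Proof.
move=> mX PF e e0.
set A := fun n : nat => X 0%N @^-1` `]-oo, n%:R].
have mA : forall n, measurable (A n) by move=> n; apply: mpre => //; exact: measurable_itv.
have UA : \bigcup_n A n = setT.
  apply/seteqP; split => // w _.
  have := archi_boundP (normr_ge0 (X 0%N w)).
  move=> h; exists (Num.Def.archi_bound `|X 0%N w|) => //.
  rewrite /A /= in_itv /=; apply: ltW; exact: le_lt_trans (ler_norm _) h.
have ndA : {homo A : n m / (n <= m)%N >-> (n <= m)%O}.
  move=> n m nm; apply/subsetPset => w; rewrite /A /= !in_itv /= => h; apply: le_trans h _.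
  by rewrite ler_nat.
have := @nondecreasing_cvg_mu _ _ R P A mA; rewrite UA => /(_ measurableT ndA).
move=> h; have {h} : (P \o A) x @[x --> \oo] --> (1%:E : \bar R).
  by rewrite -(probability_setT P); exact: h.
have -> : (P \o A) = (fun n => (F n%:R)%:E) by apply/funext => n; rewrite /= PF.
move/fine_cvgP => [_ /cvgrPdist_lt /(_ e e0) [N _ hN]].
exists N%:R; have := hN N (leqnn N); rewrite /= ltr_norml => /andP[_]; lra.
Qed.

Lemma bigI_in {T : Type} (A : nat -> set T) (s : seq nat) w :
  (\big[setI/setT]_(i <- s) A i) w <-> (forall i, i \in s -> A i w).
Proof.
elim: s => [|a s IH]; first by rewrite big_nil; split => // _ i.
rewrite big_cons; split.
  move=> [Aa /IH h] i; rewrite inE => /orP[/eqP -> //|]; exact: h.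
move=> h; split; first by apply: h; rewrite inE eqxx.
by apply/IH => i si; apply: h; rewrite inE si orbT.
Qed.

Definition Ev {d} {Omega : measurableType d} {R : realType} (X : nat -> Omega -> R) k z :=
  \big[setI/setT]_(i <- iota 0 k) (X i @^-1` `]-oo, z]).

Lemma Ev_in {d} {Omega : measurableType d} {R : realType} (X : nat -> Omega -> R) k z w :
  Ev X k z w <-> (forall i, (i < k)%N -> X i w <= z).
Proof.
rewrite /Ev bigI_in; split => h i.
  by move=> ik; have := h i; rewrite mem_iota add0n ik /= in_itv /=; apply.
by rewrite mem_iota add0n /= in_itv /= => ik; exact: h.
Qed.

Lemma Ev_meas {d} {Omega : measurableType d} {R : realType} (X : nat -> Omega -> R) k z :
  (forall j, measurable_fun setT (X j)) -> measurable (Ev X k z).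
Proof.
move=> mX; rewrite /Ev; elim: (iota 0 k) => [|a s IH]; first by rewrite big_nil.
rewrite big_cons; apply: measurableI => //; apply: mpre => //; exact: measurable_itv.
Qed.

Lemma Ev_P {d} {Omega : measurableType d} {R : realType} (P : probability Omega R)
  (X : nat -> Omega -> R) (F : R -> R) k z :
  (forall j (x : R), P (X j @^-1` `]-oo, x]) = (F x)%:E) ->
  mutually_independent P X -> P (Ev X k z) = ((F z) ^+ k)%:E.
Proof.
move=> PF ind; rewrite /Ev (ind (iota 0 k) (iota_uniq 0 k) (fun _ => `]-oo, z]%classic)); last first.
  by move=> _; exact: measurable_itv.
rewrite (eq_bigr (fun _ => (F z)%:E)); last by move=> i _; rewrite PF.
rewrite -[k in RHS](size_iota 0 k); elim: (iota 0 k) => [|a s IH].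
  by rewrite big_nil expr0.
by rewrite big_cons IH /= exprS EFinM.
Qed.

Lemma beq_bk {R : realType} (F : R -> R) v n : beq F v n = bk F n.-1 v.
Proof. by []. Qed.

Lemma all_othersP {d} {Omega : measurableType d} {R : realType} (F : R -> R)
  (X : nat -> Omega -> R) n b w :
  reflect (forall j, (j < n.-1)%N -> bk F n.-1 (X j w) <= b)
    (all (fun c => c <= b) [seq beq F (X j w) n | j <- iota 0 n.-1]).
Proof.
rewrite all_map; apply: (iffP allP) => h j.
  by move=> jn; apply: h; rewrite mem_iota add0n jn.
by rewrite mem_iota add0n /= => jn; exact: h.
Qed.

Lemma pay_ge0 {d} {Omega : measurableType d} {R : realType} (F : R -> R)
  (X : nat -> Omega -> R) n v b w : b <= v -> 0 <= payoff F X n v b w.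
Proof.
move=> bv; rewrite /payoff; case: ifP => // _.
by apply: divr_ge0; rewrite ?subr_ge0 // addr_ge0.
Qed.

Lemma pay_le0 {d} {Omega : measurableType d} {R : realType} (F : R -> R)
  (X : nat -> Omega -> R) n v b w : v <= b -> payoff F X n v b w <= 0.
Proof.
move=> bv; rewrite /payoff; case: ifP => // _.
by apply: mulr_le0_ge0; rewrite ?subr_le0 // invr_ge0 addr_ge0.
Qed.

Lemma pay_le {d} {Omega : measurableType d} {R : realType} (F : R -> R)
  (X : nat -> Omega -> R) n v b w : b <= v ->
  payoff F X n v b w <=
  (v - b) * (all (fun c => c <= b) [seq beq F (X j w) n | j <- iota 0 n.-1])%:R.
Proof.
move=> bv; rewrite /payoff; case: ifP => _; last by rewrite mulr0.
rewrite mulr1 ler_pdivrMr ?ltr_wpDr //; apply: ler_peMr; first by rewrite subr_ge0.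
by rewrite lerDl.
Qed.

Lemma pay_up {d} {Omega : measurableType d} {R : realType} (F : R -> R)
  (X : nat -> Omega -> R) n v b z w : b <= v ->
  (forall x, bk F n.-1 x <= b -> x <= z) ->
  payoff F X n v b w <= (v - b) * \1_(Ev X n.-1 z) w.
Proof.
move=> bv hz; apply: le_trans (pay_le _ _ _ _ bv) _.
apply: ler_wpM2l; first by rewrite subr_ge0.
case: all_othersP => // h; rewrite indicE.
have -> : w \in Ev X n.-1 z.
  by rewrite inE; apply/Ev_in => i ik; apply: hz; exact: h.
by [].
Qed.

Lemma pay_low {d} {Omega : measurableType d} {R : realType} (F : R -> R)
  (X : nat -> Omega -> R) n v w0 w : (forall x, 0 <= F x) ->
  (forall x, x <= w0 -> bk F n.-1 x < bk F n.-1 v) ->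
  (v - bk F n.-1 v) * \1_(Ev X n.-1 w0) w <= payoff F X n v (beq F v n) w.
Proof.
move=> F0 hw; rewrite indicE; case: (boolP (w \in Ev X n.-1 w0)); last first.
  by rewrite mulr0 => _; apply: pay_ge0; rewrite beq_bk; exact: bk_le.
rewrite inE => /Ev_in hE; rewrite mulr1 /payoff.
have -> : all (fun c => c <= beq F v n) [seq beq F (X j w) n | j <- iota 0 n.-1].
  by apply/all_othersP => j jn; apply: ltW; apply: hw; exact: hE.
have -> : count (fun c => c == beq F v n) [seq beq F (X j w) n | j <- iota 0 n.-1] = 0%N.
  apply/eqP; rewrite -leqn0 leqNgt -has_count; apply/hasP => -[c].
  move=> /mapP[j]; rewrite mem_iota add0n /= => jn -> /eqP.
  by rewrite !beq_bk => E; have := hw _ (hE _ jn); rewrite E ltxx.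
by rewrite addr0 divr1 beq_bk.
Qed.

Unset Implicit Arguments.

Theorem proposition4 (R : realType) (d : measure_display) (Omega : measurableType d)
    (P : probability Omega R)
    (F : R -> R) (X : nat -> Omega -> R) (pN : nat -> R) :
  (* F: continuous distribution of valuations, supported on [0, +oo) *)
  continuous F -> F 0 = 0 ->
  (* valuations of the (other) agents: i.i.d. with cdf F *)
  (forall j, measurable_fun setT (X j)) ->
  (forall j (x : R), P (X j @^-1` `]-oo, x]) = (F x)%:E) ->
  mutually_independent P X ->
  (* distribution of the number of agents: at least two almost surely *)
  (forall n, 0 <= pN n) -> pN 0%N = 0 -> pN 1%N = 0 ->
  series pN @ \oo --> (1 : R) ->
  register_and_bid_equilibrium P F X pN.
Proof.
move=> Fc F00 mX PF ind pN0 pN0' pN1 _ v v0.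
have Fge0 := F_ge0 PF.
have Fle1 := F_le1 mX PF.
have Fm := F_mono mX PF.
have Fz : forall x, x <= 0 -> F x = 0.
  by move=> x x0; apply/eqP; rewrite eq_le Fge0 andbT -F00; exact: Fm.
have EU0 : forall n, (0 <= EU P F X n v (beq F v n))%E.
  move=> n; apply: integral_ge0 => w _; rewrite lee_fin; apply: pay_ge0.
  by rewrite beq_bk; exact: bk_le.
split.
  apply: nneseries_ge0 => n _ _; apply: mule_ge0 => //; by rewrite lee_fin.
move=> n pn b.
have n2 : (1 < n)%N.
  case: n pn => [|[|n]] //; by rewrite ?pN0' ?pN1 ltxx.
set k := n.-1.
have k0 : (0 < k)%N by rewrite /k -ltnS prednK // ltnW.
set U := (v - bk F k v) * F v ^+ k.
have U0 : 0 <= U by rewrite mulr_ge0 ?exprn_ge0 // subr_ge0 bk_le.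
have low : (U%:E <= EU P F X n v (beq F v n))%E.
  have [Fv0|Fvn] := eqVneq (F v) 0.
    by rewrite /U Fv0 expr0n gtn_eqF // mulr0; exact: EU0.
  have Fvp : 0 < F v by rewrite lt_def Fvn Fge0.
  have c0 : 0 <= v - bk F k v by rewrite subr_ge0 bk_le.
  have key : forall w, w <= v -> F w < F v ->
      (((v - bk F k v) * F w ^+ k)%:E <= EU P F X n v (beq F v n))%E.
    move=> w wv Fwv.
    have hw : forall x, x <= w -> bk F k x < bk F k v.
      move=> x xw; have [x0|x0] := ltP x 0.
        rewrite bk_neg // ?ltW //; apply: lt_le_trans x0 _; exact: bk_ge0.
      apply: bk_strict => //; first exact: le_trans xw wv.
      rewrite ltrXn2r ?gtn_eqF //; apply: le_lt_trans Fwv; exact: Fm.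
    rewrite EFinM -(Ev_P k w PF ind) -int_indic_c //; last exact: Ev_meas.
    apply: int_mono => w'; first by rewrite lee_fin mulr_ge0 // indicE ler0n.
    by rewrite lee_fin; exact: pay_low.
  case E: (EU P F X n v (beq F v n)) => [r| |]; last 2 first.
  - by rewrite leey.
  - by have := EU0 n; rewrite E.
  rewrite lee_fin /U; apply: approx => //.
  move=> e e0; set m := Num.min (e / 2) (F v / 2).
  have m0 : 0 < m by rewrite lt_min !divr_gt0.
  have hm : m <= F v / 2 by rewrite ge_min lexx orbT.
  have hm' : m <= e / 2 by rewrite ge_min lexx.
  have [w wI Fw] : exists2 w, w \in `[0, v] & F w = F v - m.
    apply: IVT => //; first by apply: continuous_subspaceT.
    rewrite F00 ge_min le_max; apply/andP; split.
      by apply/orP; left; lra.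
    by apply/orP; right; lra.
  move: wI; rewrite in_itv /= => /andP[w0 wv].
  exists (F w); split.
  - exact: Fge0.
  - by rewrite Fw; lra.
  - by rewrite Fw; lra.
  - rewrite -lee_fin -E; apply: key => //; rewrite Fw; lra.
have up : (EU P F X n v b <= U%:E)%E.
  have [vb|bv] := leP v b.
    have h : (EU P F X n v b <= 0)%E by apply: int_le0 => w; exact: pay_le0.
    by apply: le_trans h _; rewrite lee_fin.
  set c := v - b.
  have c0 : 0 <= c by rewrite subr_ge0 ltW.
  set S := [set x | bk F k x <= b].
  have KS : forall y, S y -> c * F y ^+ k <= U.
    move=> y Sy; apply: le_trans (bk_K y Fc Fge0 Fm Fz k0 v0).
    by apply: ler_wpM2r; rewrite ?exprn_ge0 // lerB.
  have [ub|nub] := pselect (has_ubound S).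
    set z := sup S.
    have Sz : forall x, S x -> x <= z by move=> x Sx; exact: sup_ubound.
    apply: (@le_trans _ _ ((c * F z ^+ k)%:E)).
      rewrite EFinM -(Ev_P k z PF ind) -int_indic_c //; last exact: Ev_meas.
      apply: int_mono => w; first by rewrite lee_fin; apply: pay_ge0; exact: ltW.
      by rewrite lee_fin; apply: pay_up; [exact: ltW | exact: Sz].
    rewrite lee_fin; apply: approx => //.
    move=> e e0; have [dl dl0 hdl] := cont_eps (Fc z) e0.
    have hS : has_sup S.
      split => //; exists (Num.min b 0); rewrite /S /= bk_neg //; last by rewrite ge_min lexx orbT.
      by rewrite ge_min lexx.
    have [y Sy zy] := sup_adherent dl0 hS.
    have yz : y <= z by exact: Sz.
    exists (F y); split.
    - exact: Fge0.
    - exact: Fm.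
    - have : `|F z - F y| < e.
        apply: hdl; rewrite ger0_norm ?subr_ge0 //; rewrite -/z in zy; lra.
      by rewrite ltr_norml => /andP[_ ->].
    - exact: KS.
  apply: (@le_trans _ _ ((c * 1)%:E)).
    have -> : (c * 1)%:E = (\int[P]_w (c * \1_setT w)%:E)%E.
      rewrite int_indic_c // EFinM; f_equal; exact/esym/probability_setT.
    apply: int_mono => w; first by rewrite lee_fin; apply: pay_ge0; exact: ltW.
    rewrite lee_fin indicE mem_set // mulr1.
    apply: le_trans (pay_le _ _ _ _ (ltW bv)) _.
    by rewrite ler_piMr // lern1 leq_b1.
  rewrite lee_fin -(expr1n _ k); apply: approx => //.
  move=> e e0; have [x0 hx0] := F_top mX PF e0.
  have [y Sy xy] : exists2 y, S y & x0 < y.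
    apply: contrapT => h; apply: nub; exists x0 => y Sy.
    rewrite leNgt; apply/negP => yx; apply: h; by exists y.
  exists (F y); split.
  - exact: Fge0.
  - exact: Fle1.
  - have : F x0 <= F y by apply: Fm; exact: ltW.
    lra.
  - exact: KS.
exact: le_trans up low.
Qed.
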